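(* Let $P_S,H_{SR},H_{SD},H_{RD},\sigma_a^2,\sigma_b^2>0$, $\eta\in(0,1]$, assume $\sigma_R^2=\sigma_D^2=\sigma_a^2+\sigma_b^2$ and $H_{SR}>H_{SD}$, and let $\rho^{\mathrm{th}}=1-\frac{H_{SD}\sigma_b^2}{H_{SR}\sigma_D^2-H_{SD}\sigma_a^2}$. Fix $\rho\in(0,\rho^{\mathrm{th}})$ and set $C^{(PS)}_{SR}=\log\big(1+\frac{(1-\rho)P_SH_{SR}}{(1-\rho)\sigma_a^2+\sigma_b^2}\big)$, $m=P_SH_{SD}/\sigma_D^2$, $b=C_{SD}=\log(1+m)$, $a'=C^{(PS)}_{SR}-C_{SD}$, $c'=\eta\rho H_{SR}H_{RD}P_S/\sigma_D^2$. Then the problem $$\max_{\lambda\in(0,1)}\min\Big\{\lambda C^{(PS)}_{SR},\ \lambda b+(1-\lambda)\log\Big(1+m+\frac{c'\lambda}{1-\lambda}\Big)\Big\}$$ is solved by $\lambda^*=\max\{\lambda_1,\lambda_2\}$, where $$\lambda_1=\frac{-\frac1{a'}\mathcal W_{-1}\!\big(-\frac{a'}{c'}e^{-\frac{a'(1+m)}{c'}}\big)-\frac{1+m}{c'}}{1-\frac1{a'}\mathcal W_{-1}\!\big(-\frac{a'}{c'}e^{-\frac{a'(1+m)}{c'}}\big)-\frac{1+m}{c'}},\qquad \lambda_2=\frac{e^{\mathcal W_0\left(\frac{c'-(1+m)}{e^{1+b}}\right)+b+1}-(1+m)}{e^{\mathcal W_0\left(\frac{c'-(1+m)}{e^{1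+b}}\right)+b+1}+c'-(1+m)}.$$
   Context: $\log$ is the natural logarithm; $\mathcal W_0,\mathcal W_{-1}$ are the principal and lower real branches of the Lambert W function. This is the power-splitting relay protocol with energy accumulation (maximal ratio combining) at the destination for fixed power-splitting ratio $\rho$, with relay forwarding power $\eta\rho H_{SR}P_S\lambda/(1-\lambda)$. *)

(* Defs.v *)
From Stdlib Require Import Reals Lra ClassicalEpsilon.
Open Scope R_scope.

(* Principal real branch of Lambert W: for x >= -1/e, the unique w >= -1
   with w * exp w = x (chosen by Hilbert's epsilon; unspecified outside). *)
Definition LambertW0 (x : R) : R :=
  epsilon (inhabits 0) (fun w => -1 <= w /\ w * exp w = x).

(* Lower real branch of Lambert W: for -1/e <= x < 0, the unique w <= -1
   with w * exp w = x. *)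
Definition LambertWm1 (x : R) : R :=
  epsilon (inhabits 0) (fun w => w <= -1 /\ w * exp w = x).

Definition ps_objective (CSR b m c' lam : R) : R :=
  Rmin (lam * CSR) (lam * b + (1 - lam) * ln (1 + m + c' * lam / (1 - lam))).

(* Main.v *)
Require Import Defs.
From Stdlib Require Import Reals Lra ClassicalEpsilon.
Open Scope R_scope.

Lemma cont_wexp (y : R) : continuity (fun w => y - w * exp w).
Proof. reg. Qed.

Lemma cont_wexp2 (y : R) : continuity (fun w => w * exp w - y).
Proof. reg. Qed.

Lemma exp_pos_ge v : 0 <= v -> v <= exp v.
Proof. intros. pose proof (exp_ineq1_le v). lra. Qed.

Lemma W0_spec y : - exp (-1) < y ->
  -1 <= LambertW0 y /\ LambertW0 y * exp (LambertW0 y) = y.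
Proof.
  intro Hy. unfold LambertW0. apply epsilon_spec.
  set (V := Rabs y + 1).
  assert (HV : y < V * exp V).
  { assert (0 <= Rabs y) by apply Rabs_pos. pose proof (Rle_abs y).
    pose proof (exp_pos_ge V ltac:(unfold V; lra)).
    assert (1 <= exp V) by (pose proof (exp_ineq1_le V); unfold V in *; lra).
    assert (V <= V * exp V) by (unfold V in *; nra). unfold V in *; lra. }
  destruct (IVT (fun w => w * exp w - y) (-1) V (cont_wexp2 y)) as [z [Hz1 Hz2]].
  - unfold V; pose proof (Rabs_pos y); lra.
  - simpl. lra.
  - simpl; lra.
  - exists z. simpl in Hz2. split; lra.
Qed.

Lemma Wm1_spec y : - exp (-1) < y < 0 ->
  LambertWm1 y <= -1 /\ LambertWm1 y * exp (LambertWm1 y) = y.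
Proof.
  intro Hy. unfold LambertWm1. apply epsilon_spec.
  set (z := - y). assert (Hz : 0 < z) by (unfold z; lra).
  set (v := 4 / z + 1).
  assert (Hzv : z * v = 4 + z) by (unfold v; field; lra).
  assert (Hv : 1 < v) by (unfold v; assert (0 < 4/z) by (apply Rdiv_lt_0_compat; lra); lra).
  assert (He : exp v = exp (v/2) * exp (v/2)) by (rewrite <- exp_plus; f_equal; field).
  pose proof (exp_ineq1_le (v/2)).
  assert (Hsq : v * v / 4 < exp v) by (rewrite He; nra).
  assert (Hlt : v < z * exp v) by nra.
  assert (Hx0 : y < - v * exp (- v)).
  { rewrite exp_Ropp. pose proof (exp_pos v).
    apply Rmult_lt_reg_r with (exp v); auto.
    replace (- v * / exp v * exp v) with (- v) by (field; lra). unfold z in Hlt; lra. }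
  destruct (IVT (fun w => y - w * exp w) (- v) (-1) (cont_wexp y)) as [w [Hw1 Hw2]].
  - lra.
  - simpl. lra.
  - simpl. lra.
  - exists w. simpl in Hw2. split; lra.
Qed.

Lemma ln_le_sub1 y : 0 < y -> ln y <= y - 1.
Proof. intro. pose proof (exp_ineq1_le (ln y)). rewrite exp_ln in H0; lra. Qed.

Lemma ln_diff_le x y : 0 < x -> 0 < y -> ln x - ln y <= x / y - 1.
Proof.
  intros. replace x with (x / y * y) at 1 by (field; lra).
  rewrite ln_mult; [| apply Rdiv_lt_0_compat; lra | lra].
  pose proof (ln_le_sub1 (x/y) ltac:(apply Rdiv_lt_0_compat; lra)). lra.
Qed.

Definition f2 b m c l := l*b + (1-l)*ln(1+m+c*l/(1-l)).
Definition Xf m c l := 1+m+c*l/(1-l).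

Lemma Xf_pos m c l : 0 < m -> 0 < c -> 0 <= l < 1 -> 0 < Xf m c l.
Proof. intros. unfold Xf. assert (0 <= c*l/(1-l)).
  { apply Rmult_le_pos. nra. left; apply Rinv_0_lt_compat; lra. } lra. Qed.

Lemma f2_tangent b m c l mu : 0 < m -> 0 < c -> 0 < l < 1 -> 0 < mu < 1 ->
  f2 b m c l <= f2 b m c mu + (l - mu) * (b + 1 - ln (Xf m c mu) + (c - 1 - m) / Xf m c mu).
Proof.
  intros. pose proof (Xf_pos m c l H H0 ltac:(lra)). pose proof (Xf_pos m c mu H H0 ltac:(lra)).
  pose proof (ln_diff_le _ _ H3 H4).
  assert (Hid : (1 - l) * (Xf m c l / Xf m c mu - 1) = (l - mu) * (1 + (c - 1 - m) / Xf m c mu)).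
  { unfold Xf in *. field. split; [lra|]. split; [nra|lra]. }
  unfold f2. fold (Xf m c l). fold (Xf m c mu).
  assert ((1-l) * (ln (Xf m c l) - ln (Xf m c mu)) <= (1-l) * (Xf m c l / Xf m c mu - 1)).
  { apply Rmult_le_compat_l; lra. }
  nra.
Qed.

Lemma k_tangent a m c s tau : 0 < m -> 0 < c -> 0 <= s -> 0 <= tau ->
  (ln (1+m+c*s) - a*s) - (ln (1+m+c*tau) - a*tau) <= (s - tau)*(c/(1+m+c*tau) - a).
Proof.
  intros. assert (0 < 1+m+c*s) by nra. assert (0 < 1+m+c*tau) by nra.
  pose proof (ln_diff_le _ _ H3 H4).
  assert ((1+m+c*s)/(1+m+c*tau) - 1 = (s - tau) * (c/(1+m+c*tau))) by (field; lra).
  nra.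
Qed.
Lemma le_tau l t : 0 < l < 1 -> 0 < t -> l <= t/(1+t) -> l/(1-l) <= t.
Proof.
  intros. apply Rmult_le_reg_r with (1-l); [lra|].
  replace (l/(1-l)*(1-l)) with l by (field; lra).
  assert (t/(1+t)*(1+t) = t) by (field; lra). nra.
Qed.

Lemma ge_tau l t : 0 < l < 1 -> 0 < t -> t/(1+t) <= l -> t <= l/(1-l).
Proof.
  intros. apply Rmult_le_reg_r with (1-l); [lra|].
  replace (l/(1-l)*(1-l)) with l by (field; lra).
  assert (t/(1+t)*(1+t) = t) by (field; lra). nra.
Qed.

Lemma cross CSR m c lam : 0 < lam < 1 ->
  f2 (ln (1+m)) m c lam - lam * CSR =
  (1 - lam) * (ln (1 + m + c * (lam/(1-lam))) - (CSR - ln (1+m)) * (lam/(1-lam))).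
Proof.
  intros. unfold f2. replace (c*lam/(1-lam)) with (c*(lam/(1-lam))) by (field; lra).
  field. lra.
Qed.

Lemma core (CSR m c' : R) (hm : 0 < m) (hc : 0 < c') (hC : ln (1 + m) < CSR) :
  let b := ln (1 + m) in
  let a' := CSR - b in
  let Wm := LambertWm1 (- (a' / c') * exp (- (a' * (1 + m) / c'))) in
  let lam1 := (- (1 / a') * Wm - (1 + m) / c') /
              (1 - (1 / a') * Wm - (1 + m) / c') in
  let E := exp (LambertW0 ((c' - (1 + m)) / exp (1 + b)) + b + 1) in
  let lam2 := (E - (1 + m)) / (E + c' - (1 + m)) in
  let lamstar := Rmax lam1 lam2 in
  0 < lamstar < 1 /\
  forall lam, 0 < lam < 1 ->
    ps_objective CSR b m c' lam <= ps_objective CSR b m c' lamstar.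
Proof.
  intros b a' Wm lam1 E lam2 lamstar.
  assert (ha : 0 < a') by (unfold a', b; lra).
  assert (hb : 0 < b) by (unfold b; rewrite <- ln_1; apply ln_increasing; lra).
  pose (s := a' * (1 + m) / c').
  assert (hs : 0 < s) by (unfold s; apply Rdiv_lt_0_compat; nra).
  assert (hac : a'/c' < s) by (unfold s; apply Rmult_lt_compat_r with (r := /c') in hm; [|apply Rinv_0_lt_compat; lra];
     unfold Rdiv; nra).
  assert (hes : exp (-s) * exp s = 1) by (rewrite exp_Ropp; field; apply Rgt_not_eq, exp_pos).
  assert (hs1 : s <= exp s * exp (-1)) by (rewrite <- exp_plus; pose proof (exp_ineq1_le (s + -1)); lra).
  assert (Hy1 : - exp (-1) < - (a' / c') * exp (- (a' * (1 + m) / c')) < 0).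
  { fold s. pose proof (exp_pos (-s)). pose proof (exp_pos s). pose proof (exp_pos (-1)).
    assert (0 < a'/c') by (apply Rdiv_lt_0_compat; lra).
    split; [|nra].
    assert (s * exp (-s) <= exp (-1)) by nra. nra. }
  destruct (Wm1_spec _ Hy1) as [HW1 HW2]. fold Wm in HW1, HW2. fold s in HW2.
  pose (t1 := - (1 / a') * Wm - (1 + m) / c').
  pose (X1 := 1 + m + c' * t1).
  assert (HX1 : X1 = - (c'/a') * Wm) by (unfold X1, t1; field; lra).
  assert (HX1p : 0 < X1) by (rewrite HX1; assert (0 < c'/a') by (apply Rdiv_lt_0_compat; lra); nra).
  assert (Hexp : exp (a' * t1) = X1).
  { replace (a' * t1) with (- Wm + - s) by (unfold t1, s; field; lra).
    rewrite exp_plus.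
    assert (exp (- s) = - (c'/a') * (Wm * exp Wm)) by (rewrite HW2; field; lra).
    rewrite H. assert (exp (- Wm) * exp Wm = 1) by (rewrite exp_Ropp; field; apply Rgt_not_eq, exp_pos).
    rewrite HX1. replace (exp (- Wm) * (- (c' / a') * (Wm * exp Wm))) with (- (c'/a') * Wm * (exp (- Wm) * exp Wm)) by ring.
    rewrite H0; ring. }
  assert (Hc1 : c' <= a' * X1) by (rewrite HX1; field_simplify; [nra | lra]).
  assert (Ht1 : 0 < t1).
  { destruct (Rlt_or_le 0 t1) as [|Hle]; [auto|exfalso].
    pose proof (exp_ineq1_le (- (a' * t1))).
    assert (exp (a' * t1) * exp (- (a' * t1)) = 1) by (rewrite exp_Ropp; field; apply Rgt_not_eq, exp_pos).
    rewrite Hexp in H0.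
    assert (X1 * (exp (- (a' * t1)) - (1 + - (a' * t1))) >= 0) by nra.
    assert ((a' * X1 - c') * (- t1) >= 0) by nra.
    unfold X1 in *. nra. }
  assert (Hlam1 : lam1 = t1 / (1 + t1)) by (unfold lam1, t1; f_equal; ring).
  assert (Hlam1b : 0 < lam1 < 1) by (rewrite Hlam1; split; [apply Rdiv_lt_0_compat; lra|
      apply Rmult_lt_reg_r with (1 + t1); [lra|]; field_simplify; lra]).
  pose (k := fun tau => ln (1 + m + c' * tau) - a' * tau).
  assert (Hk0 : k 0 = b) by (unfold k, b; rewrite !Rmult_0_r, Rplus_0_r; ring).
  assert (Hkt1 : k t1 = 0) by (unfold k; fold X1; rewrite <- Hexp, ln_exp; ring).
  assert (HA : forall tau, 0 <= tau <= t1 -> 0 <= k tau).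
  { intros tau Htau.
    pose proof (k_tangent a' m c' 0 tau hm hc ltac:(lra) ltac:(lra)) as T0.
    pose proof (k_tangent a' m c' t1 tau hm hc ltac:(lra) ltac:(lra)) as T1.
    fold (k 0) (k tau) in T0. fold (k t1) (k tau) in T1.
    rewrite Hk0 in T0. rewrite Hkt1 in T1.
    set (D := c' / (1 + m + c' * tau) - a') in *.
    assert ((t1 - tau) * (b - k tau) <= (t1 - tau) * ((0 - tau) * D)) by (apply Rmult_le_compat_l; lra).
    assert (tau * (0 - k tau) <= tau * ((t1 - tau) * D)) by (apply Rmult_le_compat_l; lra).
    nra. }
  assert (HB : forall tau, t1 <= tau -> k tau <= 0).
  { intros tau Htau.
    pose proof (k_tangent a' m c' tau t1 hm hc ltac:(lra) ltac:(lra)) as T.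
    fold (k tau) (k t1) in T. rewrite Hkt1 in T. fold X1 in T.
    assert (c' / X1 <= a') by (apply Rmult_le_reg_r with X1; [lra|]; field_simplify; lra).
    nra. }
  assert (FA : forall lam, 0 < lam < 1 -> lam <= lam1 -> lam * CSR <= f2 b m c' lam).
  { intros lam Hl Hle. rewrite Hlam1 in Hle. pose proof (le_tau _ _ Hl Ht1 Hle).
    pose proof (cross CSR m c' lam Hl). fold b a' in H0.
    assert (0 <= lam / (1 - lam)) by (unfold Rdiv; apply Rmult_le_pos; [lra| left; apply Rinv_0_lt_compat; lra]).
    pose proof (HA (lam/(1-lam)) ltac:(lra)). unfold k in H2. nra. }
  assert (FB : forall lam, 0 < lam < 1 -> lam1 <= lam -> f2 b m c' lam <= lam * CSR).
  { intros lam Hl Hle. rewrite Hlam1 in Hle. pose proof (ge_tau _ _ Hl Ht1 Hle).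
    pose proof (cross CSR m c' lam Hl). fold b a' in H0.
    pose proof (HB (lam/(1-lam)) ltac:(lra)). unfold k in H1. nra. }
  pose (y2 := (c' - (1 + m)) / exp (1 + b)).
  assert (He1b : exp (1 + b) = exp 1 * (1 + m)) by (rewrite exp_plus; unfold b; rewrite exp_ln; lra).
  assert (He1 : exp (-1) = / exp 1) by (rewrite <- exp_Ropp; f_equal).
  pose proof (exp_pos 1) as Hep.
  assert (Hy2 : - exp (-1) < y2).
  { assert (y2 + exp (-1) = c' / (exp 1 * (1 + m))) by (unfold y2; rewrite He1b, He1; field; lra).
    assert (0 < c' / (exp 1 * (1 + m))) by (apply Rdiv_lt_0_compat; nra). lra. }
  destruct (W0_spec _ Hy2) as [Hw1 Hw2].
  set (w := LambertW0 y2) in *.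
  assert (Hw : -1 < w).
  { destruct Hw1 as [|Heq]; auto. exfalso. rewrite <- Heq in Hw2. lra. }
  assert (HEe : E = exp w * exp (1 + b)) by (unfold E; fold y2; fold w; rewrite <- exp_plus; f_equal; ring).
  assert (HElog : ln E = w + b + 1) by (unfold E; fold y2; fold w; apply ln_exp).
  assert (HEm : 1 + m < E).
  { unfold E; fold y2; fold w. replace (1 + m) with (exp b) by (unfold b; apply exp_ln; lra).
    apply exp_increasing; lra. }
  assert (HcE : (c' - 1 - m) / E = w).
  { rewrite HEe. assert (c' - 1 - m = y2 * exp (1 + b)) by (unfold y2; field; apply Rgt_not_eq, exp_pos).
    rewrite H, <- Hw2. field. split; apply Rgt_not_eq, exp_pos. }
  assert (Hlam2 : 0 < lam2 < 1).
  { unfold lam2. split; [apply Rdiv_lt_0_compat; lra|].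
    apply Rmult_lt_reg_r with (E + c' - (1 + m)); [lra|]. field_simplify; lra. }
  assert (HX2 : Xf m c' lam2 = E) by (unfold Xf, lam2; field; lra).
  assert (Fmax : forall lam, 0 < lam < 1 -> f2 b m c' lam <= f2 b m c' lam2).
  { intros lam Hl. pose proof (f2_tangent b m c' lam lam2 hm hc Hl Hlam2).
    rewrite HX2, HElog, HcE in H. lra. }
  assert (FD : forall lam mu, 0 < lam < 1 -> lam2 <= mu <= lam -> f2 b m c' lam <= f2 b m c' mu).
  { intros lam mu Hl Hmu. assert (Hmu' : 0 < mu < 1) by lra.
    pose proof (f2_tangent b m c' lam mu hm hc Hl Hmu').
    pose proof (Xf_pos m c' mu hm hc ltac:(lra)) as HXp.
    assert (HXE : E <= Xf m c' mu).
    { rewrite <- HX2. unfold Xf.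
      assert (lam2 / (1 - lam2) <= mu / (1 - mu)).
      { apply Rmult_le_reg_r with ((1 - lam2) * (1 - mu)); [nra|].
        field_simplify; [nra|lra|lra]. }
      unfold Rdiv in *. nra. }
    assert (HcE' : c' - 1 - m = w * E) by (rewrite <- HcE; field; lra).
    pose proof (ln_diff_le E (Xf m c' mu) ltac:(lra) HXp).
    assert (Hphi : b + 1 - ln (Xf m c' mu) + (c' - 1 - m) / Xf m c' mu <= (1 + w) * (E / Xf m c' mu - 1)).
    { rewrite HcE'. assert (b + 1 = ln E - w) by lra. rewrite H1.
      assert (w * E / Xf m c' mu = w * (E / Xf m c' mu)) by (field; lra). rewrite H2. nra. }
    assert (E / Xf m c' mu - 1 <= 0).
    { apply Rmult_le_reg_r with (Xf m c' mu); [lra|]. field_simplify; lra. }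
    assert ((lam - mu) * ((1 + w) * (E / Xf m c' mu - 1)) <= 0).
    { assert (0 <= lam - mu) by lra. assert (0 <= (1 + w) * (1 - E / Xf m c' mu)) by (apply Rmult_le_pos; lra).
      nra. }
    assert ((lam - mu) * (b + 1 - ln (Xf m c' mu) + (c' - 1 - m) / Xf m c' mu) <= (lam - mu) * ((1 + w) * (E / Xf m c' mu - 1)))
      by (apply Rmult_le_compat_l; lra).
    lra. }
  assert (Hobj : forall l, ps_objective CSR b m c' l = Rmin (l * CSR) (f2 b m c' l)) by reflexivity.
  assert (HCp : 0 < CSR) by (unfold b in hb; lra).
  split.
  { unfold lamstar, Rmax. destruct (Rle_dec lam1 lam2); lra. }
  intros lam Hl. rewrite !Hobj.
  destruct (Rle_dec lam2 lam1) as [H21|H12].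
  - unfold lamstar. rewrite Rmax_left by lra.
    pose proof (FA lam1 Hlam1b (Rle_refl _)). pose proof (FB lam1 Hlam1b (Rle_refl _)).
    apply Rmin_glb.
    + destruct (Rle_or_lt lam lam1).
      * pose proof (Rmin_l (lam * CSR) (f2 b m c' lam)). nra.
      * pose proof (Rmin_r (lam * CSR) (f2 b m c' lam)). pose proof (FD lam lam1 Hl ltac:(lra)). lra.
    + destruct (Rle_or_lt lam lam1).
      * pose proof (Rmin_l (lam * CSR) (f2 b m c' lam)). nra.
      * pose proof (Rmin_r (lam * CSR) (f2 b m c' lam)). pose proof (FD lam lam1 Hl ltac:(lra)). lra.
  - unfold lamstar. rewrite Rmax_right by lra.
    pose proof (FB lam2 Hlam2 ltac:(lra)).
    assert (Rmin (lam * CSR) (f2 b m c' lam) <= f2 b m c' lam2).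
    { destruct (Rle_or_lt lam lam1).
      * pose proof (Rmin_l (lam * CSR) (f2 b m c' lam)). pose proof (FA lam1 Hlam1b (Rle_refl _)).
        pose proof (Fmax lam1 Hlam1b). nra.
      * pose proof (Rmin_r (lam * CSR) (f2 b m c' lam)). pose proof (Fmax lam Hl). lra. }
    apply Rmin_glb; lra.
Qed.

Theorem corollary2
  (PS HSR HSD HRD sa2 sb2 sR2 sD2 eta rho : R)
  (hPS : 0 < PS) (hHSR : 0 < HSR) (hHSD : 0 < HSD) (hHRD : 0 < HRD)
  (hsa : 0 < sa2) (hsb : 0 < sb2)
  (heta : 0 < eta <= 1)
  (hsR : sR2 = sa2 + sb2) (hsD : sD2 = sa2 + sb2)
  (hH : HSR > HSD)
  (hrho : 0 < rho < 1 - HSD * sb2 / (HSR * sD2 - HSD * sa2)) :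
  let CSR := ln (1 + (1 - rho) * PS * HSR / ((1 - rho) * sa2 + sb2)) in
  let m := PS * HSD / sD2 in
  let b := ln (1 + m) in
  let a' := CSR - b in
  let c' := eta * rho * HSR * HRD * PS / sD2 in
  let Wm := LambertWm1 (- (a' / c') * exp (- (a' * (1 + m) / c'))) in
  let lam1 := (- (1 / a') * Wm - (1 + m) / c') /
              (1 - (1 / a') * Wm - (1 + m) / c') in
  let E := exp (LambertW0 ((c' - (1 + m)) / exp (1 + b)) + b + 1) in
  let lam2 := (E - (1 + m)) / (E + c' - (1 + m)) in
  let lamstar := Rmax lam1 lam2 in
  0 < lamstar < 1 /\
  forall lam, 0 < lam < 1 ->
    ps_objective CSR b m c' lam <= ps_objective CSR b m c' lamstar.
Proof.
  intros CSR m b a' c'.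
  assert (hD : 0 < sD2) by lra.
  assert (hDen : 0 < HSR * sD2 - HSD * sa2) by (rewrite hsD; nra).
  assert (hq : HSD * sb2 < (1 - rho) * (HSR * sD2 - HSD * sa2)).
  { destruct hrho as [_ h]. apply Rmult_lt_compat_r with (r := HSR * sD2 - HSD * sa2) in h; [|lra].
    replace ((1 - HSD * sb2 / (HSR * sD2 - HSD * sa2)) * (HSR * sD2 - HSD * sa2))
      with ((HSR * sD2 - HSD * sa2) - HSD * sb2) in h by (field; lra). lra. }
  assert (hr1 : rho < 1).
  { destruct (Rlt_or_le rho 1); auto. exfalso. assert (0 <= (rho - 1) * (HSR * sD2 - HSD * sa2)) by nra.
    assert (0 < HSD * sb2) by nra. nra. }
  apply core.
  - unfold m. apply Rdiv_lt_0_compat; nra.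
  - unfold c'. apply Rdiv_lt_0_compat; [|lra].
    assert (0 < eta * rho) by nra. assert (0 < eta * rho * HSR) by nra.
    assert (0 < eta * rho * HSR * HRD) by nra. nra.
  - unfold CSR, m. apply ln_increasing.
    + assert (0 < PS * HSD / sD2) by (apply Rdiv_lt_0_compat; nra). lra.
    + apply Rplus_lt_compat_l.
      assert (hden : 0 < (1 - rho) * sa2 + sb2) by nra.
      apply Rmult_lt_reg_r with (sD2 * ((1 - rho) * sa2 + sb2)); [nra|].
      field_simplify; [|lra|lra].
      rewrite hsD in hq |- *. nra.
Qed.
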